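(* Let $G$ be a group with a split $BN$-pair $(H,U,N)$ with finite Weyl group, let $n_0\in N$ represent the longest element of the Weyl group and $U^-:=U^{n_0}$. Then $H\cap UU^-U=\{1\}$.
   Context: A split $BN$-pair $(H,U,N)$ for $G$ means $B=H\ltimes U$ and $N$ satisfy the axioms of split $BN$-pairs (as in Carter, Finite Groups of Lie Type, \S 2.5) with $H=B\cap N$. Products are setwise. *)

(* Defs.v *)
From HB Require Import structures.
From mathcomp Require Import all_boot.
From Stdlib Require List.

Set Implicit Arguments.
Unset Strict Implicit.
Unset Printing Implicit Defensive.

Local Open Scope group_scope.

Section BNPairs.
Variable gT : groupType.

Definition gsubset := gT -> Prop.

Definition sub_of (A C : gsubset) : Prop := forall g, A g -> C g.

Definition is_subgrp (A : gsubset) : Prop :=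
  A 1 /\ (forall x y, A x -> A y -> A (x * y)) /\ (forall x, A x -> A x^-1).

Definition normal_in (A C : gsubset) : Prop :=
  is_subgrp A /\ sub_of A C /\ forall x c, A x -> C c -> A (x ^ c).

Definition setmul (A C : gsubset) : gsubset :=
  fun g => exists a c, A a /\ C c /\ g = a * c.

Definition conjset (A : gsubset) (x : gT) : gsubset :=
  fun g => exists a, A a /\ g = a ^ x.

Definition dcoset (B : gsubset) (x : gT) : gsubset :=
  fun g => exists b1 b2, B b1 /\ B b2 /\ g = b1 * x * b2.

Definition generates (A C : gsubset) : Prop :=
  forall K, is_subgrp K -> sub_of A K -> sub_of C K -> forall g, K g.

Definition in_gen (A C D : gsubset) : Prop :=
  forall K, is_subgrp K -> sub_of C K -> sub_of D K -> sub_of A K.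

(* (B, N) is a BN-pair of gT (Carter, Finite Groups of Lie Type, 2.1) with
   H = B ∩ N and with the Weyl group W = N/H generated by the involutions
   represented by the elements of S. *)
Definition BN_pair (B N H S : gsubset) : Prop :=
  is_subgrp B /\ is_subgrp N /\
  generates B N /\
  (forall g, H g <-> (B g /\ N g)) /\ normal_in H N /\
  (forall s, S s -> N s /\ ~ H s /\ H (s * s)) /\ in_gen N S H /\
  (forall s n b, S s -> N n -> B b ->
      dcoset B n (s * b * n) \/ dcoset B (s * n) (s * b * n)) /\
  (forall s, S s ->
      ~ (forall g, (exists b, B b /\ g = s * b * s) <-> B g)).

(* split BN-pair (H, U, N) with B = H ⋉ U (Carter, 2.5) *)
Definition split_BN_pair (H U N S : gsubset) : Prop :=
  [/\ BN_pair (setmul H U) N H S,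
      normal_in U (setmul H U),
      (forall g, H g -> U g -> g = 1)
    & (forall g, (forall n, N n -> conjset (setmul H U) n g) <-> H g)].

Definition finite_weyl (N H : gsubset) : Prop :=
  exists l : seq gT, forall n, N n -> exists m h, List.In m l /\ H h /\ n = m * h.

Definition word_of (H S : gsubset) (n : gT) (k : nat) : Prop :=
  exists (l : seq gT) h, size l = k /\ (forall s, List.In s l -> S s) /\ H h /\
    n = foldr (fun x y => x * y) 1 l * h.

Definition weyl_length (H S : gsubset) (n : gT) (k : nat) : Prop :=
  word_of H S n k /\ forall k', word_of H S n k' -> k <= k'.

Definition longest_rep (N H S : gsubset) (n0 : gT) : Prop :=
  N n0 /\ exists k0, weyl_length H S n0 k0 /\
    forall n k, N n -> weyl_length H S n k -> k <= k0.

End BNPairs.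

(* Main.v *)
From Stdlib Require Import Classical ClassicalEpsilon.
Require Import Defs.
From HB Require Import structures.
From mathcomp Require Import all_boot.
From mathcomp Require Import zify.
From Stdlib Require Import Lia.
From Stdlib Require List.

Set Implicit Arguments.
Unset Strict Implicit.
Unset Printing Implicit Defensive.

Local Open Scope group_scope.

Definition pb (P : Prop) : bool := if excluded_middle_informative P then true else false.
Lemma pbP (P : Prop) : reflect P (pb P).
Proof. rewrite /pb; case: excluded_middle_informative => h; constructor; done. Qed.

Section BN.
Variables (gT : groupType) (H U N S : gT -> Prop).
Definition B : gT -> Prop := setmul H U.

Hypothesis HBsub : is_subgrp B.
Hypothesis HNsub : is_subgrp N.
Hypothesis HHBN : forall g, H g <-> (B g /\ N g).
Hypothesis HHnorm : normal_in H N.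
Hypothesis HSax : forall s, S s -> N s /\ ~ H s /\ H (s * s).
Hypothesis Hgen : in_gen N S H.

Lemma B1 : B 1. Proof. by case: HBsub. Qed.
Lemma BM x y : B x -> B y -> B (x * y). Proof. by case: HBsub => _ [h _]; apply: h. Qed.
Lemma BV x : B x -> B x^-1. Proof. by case: HBsub => _ [_ h]; apply: h. Qed.
Lemma N1 : N 1. Proof. by case: HNsub. Qed.
Lemma NM x y : N x -> N y -> N (x * y). Proof. by case: HNsub => _ [h _]; apply: h. Qed.
Lemma NV x : N x -> N x^-1. Proof. by case: HNsub => _ [_ h]; apply: h. Qed.
Lemma H1 : H 1. Proof. by case: HHnorm => [[]]. Qed.
Lemma HM x y : H x -> H y -> H (x * y). Proof. by case: HHnorm => [[_ [h _]] _]; apply: h. Qed.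
Lemma HV x : H x -> H x^-1. Proof. by case: HHnorm => [[_ [_ h]] _]; apply: h. Qed.
Lemma HB x : H x -> B x. Proof. by move/HHBN=> []. Qed.
Lemma HN x : H x -> N x. Proof. by move/HHBN=> []. Qed.
Lemma HJ h n : H h -> N n -> H (n^-1 * (h * n)).
Proof. by case: HHnorm => _ [_ hj] Hh Nn; apply: (hj h n). Qed.
Lemma HJ' h n : H h -> N n -> H (n * (h * n^-1)).
Proof. by move=> Hh Nn; have := HJ Hh (NV Nn); rewrite invgK. Qed.
Lemma SN s : S s -> N s. Proof. by case/HSax. Qed.
Lemma SnH s : S s -> ~ H s. Proof. by case/HSax=> _ []. Qed.
Lemma Sss s : S s -> H (s * s). Proof. by case/HSax=> _ []. Qed.

Lemma Hmovel h n : H h -> N n -> exists h', H h' /\ h * n = n * h'.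
Proof. move=> Hh Nn; exists (n^-1 * (h * n)); split; first exact: HJ. by rewrite mulVKg. Qed.
Lemma Hmover h n : H h -> N n -> exists h', H h' /\ n * h = h' * n.
Proof. move=> Hh Nn; exists (n * (h * n^-1)); split; first exact: HJ'.
by rewrite !mulgA mulgVK. Qed.

Definition prod (l : seq gT) : gT := foldr (fun x y => x * y) 1 l.
Definition allS (l : seq gT) : Prop := forall s, List.In s l -> S s.

Lemma prod_cat l1 l2 : prod (l1 ++ l2) = prod l1 * prod l2.
Proof. elim: l1 => [|a l IH] /=; first by rewrite mul1g. by rewrite IH mulgA. Qed.
Lemma prod_rcons l a : prod (rcons l a) = prod l * a.
Proof. by rewrite -cats1 prod_cat /= mulg1. Qed.
Lemma allS_cons a l : allS (a :: l) <-> S a /\ allS l.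
Proof.
split=> [h|[h1 h2] s /= hs].
  by split=> [|s hs]; apply: h; [left|right].
by case: hs => [<-|hs]; [exact: h1| exact: h2].
Qed.
Lemma allS_cat l1 l2 : allS (l1 ++ l2) <-> allS l1 /\ allS l2.
Proof.
split=> [h|[h1 h2] s hs].
  by split=> s hs; apply: h; apply: List.in_or_app; [left|right].
by case: (List.in_app_or _ _ _ hs) => hs'; [exact: h1|exact: h2].
Qed.
Lemma allS_nil : allS [::]. Proof. by []. Qed.
Lemma allS_rcons l a : allS (rcons l a) <-> allS l /\ S a.
Proof. rewrite -cats1 allS_cat allS_cons; split=> [[? [? _]]|[? ?]]; first done. by split=> //; split. Qed.
Lemma prodN l : allS l -> N (prod l).
Proof. elim: l => [|a l IH] /=; first by move=> _; exact: N1.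
by case/allS_cons=> Sa Sl; apply: NM; [exact: SN| exact: IH]. Qed.

Definition Wd g := exists l h, allS l /\ H h /\ g = prod l * h.

Lemma Sinv s : S s -> s^-1 = s * (s * s)^-1.
Proof. by move=> _; rewrite invgM mulgA mulgV mul1g. Qed.

Lemma prod_inv l : allS l -> exists m h, allS m /\ H h /\ size m = size l /\ (prod l)^-1 = prod m * h.
Proof.
elim: l => [|a l IH] /=.
  by move=> _; exists [::], 1; rewrite /= invg1 mulg1; split; [exact: allS_nil|split; [exact: H1|]].
case/allS_cons=> Sa /IH [m [h [Sm [Hh [sz E]]]]].
have [h2 [Hh2 E2]] := Hmovel Hh (SN Sa).
exists (rcons m a), (h2 * (a * a)^-1); split; first by apply/allS_rcons.
split; first by apply: HM => //; apply: HV; apply: Sss.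
split; first by rewrite size_rcons sz.
by rewrite invgM E (Sinv Sa) prod_rcons -!mulgA (mulgA h) E2 !mulgA.
Qed.

Lemma Wd_all n : N n -> Wd n.
Proof.
move=> Nn; refine (Hgen (K:=Wd) _ _ _ Nn).
- split; first by exists [::], 1; split; [exact: allS_nil|split; [exact: H1|rewrite /= mulg1]].
  split.
  + move=> x y [l1 [h1 [S1 [H1' ->]]]] [l2 [h2 [S2 [H2' ->]]]].
    have [h3 [Hh3 E]] := Hmovel H1' (prodN S2).
    exists (l1 ++ l2), (h3 * h2); split; first by apply/allS_cat.
    split; first exact: HM.
    by rewrite prod_cat -!mulgA (mulgA h1) E !mulgA.
  + move=> x [l [h [Sl [Hh ->]]]].
    have [m [h' [Sm [Hh' [_ E]]]]] := prod_inv Sl.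
    have [h3 [Hh3 E3]] := Hmovel (HV Hh) (prodN Sm).
    exists m, (h3 * h'); split=> //; split; first exact: HM.
    by rewrite invgM E mulgA E3 mulgA.
- by move=> s Ss; exists [:: s], 1; split; [by apply/allS_cons; split; [|exact: allS_nil] | split; [exact: H1|rewrite /= !mulg1]].
- by move=> h Hh; exists [::], h; split; [exact: allS_nil|split=> //; rewrite /= mul1g].
Qed.

Definition lenf (n : gT) : nat :=
  match excluded_middle_informative (exists k, word_of H S n k) with
  | left e => ex_minn (let: ex_intro k hk := e in ex_intro (fun k => pb (word_of H S n k)) k (introT (pbP _) hk))
  | right _ => 0
  end.

Lemma lenf_spec n : N n -> word_of H S n (lenf n) /\ forall k, word_of H S n k -> lenf n <= k.
Proof.
move=> Nn; rewrite /lenf; case: excluded_middle_informative => [e|ne]; last first.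
  case: ne; have [l [h [Sl [Hh E]]]] := Wd_all Nn; exists (size l), l, h; done.
case: ex_minnP => m /pbP hm hmin; split=> // k hk; apply: hmin; exact/pbP.
Qed.
Lemma lenf_word n : N n -> word_of H S n (lenf n). Proof. by case/lenf_spec. Qed.
Lemma lenf_min n k : N n -> word_of H S n k -> lenf n <= k. Proof. by case/lenf_spec=> _; apply. Qed.


Lemma lenf_le l h : allS l -> H h -> lenf (prod l * h) <= size l.
Proof. move=> Sl Hh; apply: lenf_min; first exact: NM (prodN Sl) (HN Hh).
by exists l, h. Qed.

Lemma lenf_dec n : N n -> exists l h, allS l /\ H h /\ size l = lenf n /\ n = prod l * h.
Proof. by move=> Nn; have [l [h [sz [Sl [Hh E]]]]] := lenf_word Nn; exists l, h. Qed.

Lemma lenf_H h : H h -> lenf h = 0.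
Proof. move=> Hh; apply/eqP; rewrite -leqn0; have := lenf_le allS_nil Hh; by rewrite /= mul1g. Qed.

Lemma lenf0 n : N n -> lenf n = 0 -> H n.
Proof. move=> Nn E; have [l [h [Sl [Hh [sz ->]]]]] := lenf_dec Nn.
by move: sz; rewrite E; case: l Sl => //= _ _; rewrite mul1g. Qed.

Lemma lenf_mulH n h : N n -> H h -> lenf (n * h) = lenf n.
Proof.
have key m g : N m -> H g -> lenf (m * g) <= lenf m.
  move=> Nm Hg; have [l [h0 [Sl [Hh0 [<- ->]]]]] := lenf_dec Nm.
  by rewrite -mulgA; apply: lenf_le => //; exact: HM.
move=> Nn Hh; apply/eqP; rewrite eqn_leq key //=.
have := key (n * h) h^-1 (NM Nn (HN Hh)) (HV Hh); by rewrite mulgK.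
Qed.

Lemma lenf_Hmul n h : N n -> H h -> lenf (h * n) = lenf n.
Proof. move=> Nn Hh; have [h' [Hh' ->]] := Hmovel Hh Nn; exact: lenf_mulH. Qed.

Lemma lenf_mul a b : N a -> N b -> lenf (a * b) <= lenf a + lenf b.
Proof.
move=> Na Nb; have [la [ha [Sa [Ha [<- ->]]]]] := lenf_dec Na.
have [lb [hb [Sb [Hb [<- ->]]]]] := lenf_dec Nb.
have [h' [Hh' E]] := Hmovel Ha (prodN Sb).
rewrite -mulgA (mulgA ha) E -!mulgA mulgA -prod_cat -size_cat.
by apply: lenf_le; [apply/allS_cat| exact: HM].
Qed.

Lemma lenf_inv n : N n -> lenf n^-1 = lenf n.
Proof.
have key m : N m -> lenf m^-1 <= lenf m.
  move=> Nm; have [l [h [Sl [Hh [<- ->]]]]] := lenf_dec Nm.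
  have [m' [h' [Sm [Hh' [sz E]]]]] := prod_inv Sl.
  have [h2 [Hh2 E2]] := Hmovel (HV Hh) (prodN Sm).
  by rewrite invgM E mulgA E2 -mulgA -sz; apply: lenf_le => //; exact: HM.
move=> Nn; apply/eqP; rewrite eqn_leq key //=.
by have := key _ (NV Nn); rewrite invgK.
Qed.

Lemma lenf_S s : S s -> lenf s = 1%N.
Proof.
move=> Ss; apply/eqP; rewrite eqn_leq; apply/andP; split.
  have := lenf_le (l:=[:: s]) (h:=1); rewrite /= !mulg1; apply; last exact: H1.
  by apply/allS_cons; split; [|exact: allS_nil].
by rewrite lt0n; apply/eqP => /(lenf0 (SN Ss)); exact: SnH.
Qed.

Lemma lenf_Sl s n : S s -> N n -> lenf (s * n) <= (lenf n).+1.
Proof. by move=> Ss Nn; have := lenf_mul (SN Ss) Nn; rewrite (lenf_S Ss). Qed.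
Lemma lenf_Sr s n : S s -> N n -> lenf (n * s) <= (lenf n).+1.
Proof. by move=> Ss Nn; have := lenf_mul Nn (SN Ss); rewrite (lenf_S Ss) addn1. Qed.

Lemma lenf_first n k : N n -> lenf n = k.+1 ->
  exists a n', S a /\ N n' /\ n = a * n' /\ lenf n' = k.
Proof.
move=> Nn E; have [l [h [Sl [Hh [sz En]]]]] := lenf_dec Nn.
move: sz; rewrite E; case: l Sl En => // a l /allS_cons [Sa Sl] En [sz].
have Nn' : N (prod l * h) by apply: NM (prodN Sl) (HN Hh).
exists a, (prod l * h); split=> //; split=> //; split; first by rewrite En mulgA.
apply/eqP; rewrite eqn_leq; apply/andP; split; first by rewrite -sz; apply: lenf_le.
by rewrite -ltnS -E En /= -mulgA; apply: lenf_Sl.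
Qed.

Lemma lenf_last n k : N n -> lenf n = k.+1 ->
  exists n' a, S a /\ N n' /\ n = n' * a /\ lenf n' = k.
Proof.
move=> Nn E; have [l [h [Sl [Hh [sz En]]]]] := lenf_dec Nn.
case/lastP: l sz Sl En => [|l a]; first by rewrite E.
rewrite size_rcons E => -[sz] /allS_rcons [Sl Sa] En.
have [h' [Hh' E']] := Hmover Hh (SN Sa).
have Nn' : N (prod l * h') by apply: NM (prodN Sl) (HN Hh').
exists (prod l * h'), a; split=> //; split=> //; split.
  by rewrite En prod_rcons -mulgA E' mulgA.
apply/eqP; rewrite eqn_leq; apply/andP; split; first by rewrite -sz; apply: lenf_le.
by rewrite -ltnS -E En prod_rcons -mulgA E' mulgA; apply: lenf_Sr.
Qed.

Definition eqH (a b : gT) : Prop := exists h, H h /\ a = b * h.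

Lemma lenf_eqH a b : N b -> eqH a b -> lenf a = lenf b.
Proof. by move=> Nb [h [Hh ->]]; apply: lenf_mulH. Qed.


Lemma eqH_refl a : eqH a a. Proof. by exists 1; split; [exact: H1| rewrite mulg1]. Qed.
Lemma eqH_sym a b : eqH a b -> eqH b a.
Proof. by case=> h [Hh ->]; exists h^-1; split; [exact: HV| rewrite mulgK]. Qed.
Lemma eqH_trans a b c : eqH a b -> eqH b c -> eqH a c.
Proof. by case=> h [Hh ->] [h' [Hh' ->]]; exists (h' * h); split; [exact: HM| rewrite mulgA]. Qed.
Lemma eqH_mull x a b : eqH a b -> eqH (x * a) (x * b).
Proof. by case=> h [Hh ->]; exists h; split; [|rewrite mulgA]. Qed.
Lemma eqH_mulr x a b : N x -> eqH a b -> eqH (a * x) (b * x).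
Proof. move=> Nx [h [Hh ->]]; have [h' [Hh' E]] := Hmovel Hh Nx.
by exists h'; split; [|rewrite -mulgA E mulgA]. Qed.
Lemma eqH_H a h : H h -> eqH (a * h) a. Proof. by move=> Hh; exists h. Qed.
Lemma eqH_N a b : N b -> eqH a b -> N a.
Proof. by move=> Nb [h [Hh ->]]; apply: NM Nb (HN Hh). Qed.
Lemma eqH_ss a s : S s -> N a -> eqH (s * (s * a)) a.
Proof. move=> Ss Na; rewrite mulgA; have [h' [Hh' ->]] := Hmovel (Sss Ss) Na; exact: eqH_H. Qed.
Lemma eqH_1 a : N a -> eqH a 1 -> H a.
Proof. by move=> _ [h [Hh ->]]; rewrite mul1g. Qed.

Hypothesis HF1 : forall s n b, S s -> N n -> B b ->
  dcoset B n (s * b * n) \/ dcoset B (s * n) (s * b * n).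
Hypothesis HF2 : forall s, S s -> ~ (forall g, (exists b, B b /\ g = s * b * s) <-> B g).

Definition C n g := dcoset B n g.

Lemma C_self n : C n n. Proof. by exists 1, 1; split; [exact: B1|split; [exact: B1|rewrite mulg1 mul1g]]. Qed.
Lemma C_mulr n g b : C n g -> B b -> C n (g * b).
Proof. by case=> b1 [b2 [B1' [B2 ->]]] Bb; exists b1, (b2 * b); split=> //; split; [exact: BM|rewrite !mulgA]. Qed.
Lemma C_mull n g b : C n g -> B b -> C n (b * g).
Proof. by case=> b1 [b2 [B1' [B2 ->]]] Bb; exists (b * b1), b2; split; [exact: BM|split=> //; rewrite !mulgA]. Qed.
Lemma C_eqH n n' g : eqH n n' -> C n g -> C n' g.
Proof. case=> h [Hh ->] [b1 [b2 [B1' [B2 ->]]]]; exists b1, (h * b2); split=> //.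
by split; [apply: BM => //; exact: HB| rewrite !mulgA]. Qed.
Lemma C_inv n g : C n g -> C n^-1 g^-1.
Proof. case=> b1 [b2 [B1' [B2 ->]]]; exists b2^-1, b1^-1; split; first exact: BV.
by split; [exact: BV| rewrite !invgM mulgA]. Qed.
Lemma C_B n g : H n -> C n g -> B g.
Proof. by move=> Hn [b1 [b2 [B1' [B2 ->]]]]; apply: BM => //; apply: BM => //; exact: HB. Qed.

Lemma Cl s n g : S s -> N n -> C n g -> C n (s * g) \/ C (s * n) (s * g).
Proof.
move=> Ss Nn [b1 [b2 [B1' [B2 ->]]]]; rewrite !mulgA.
by case: (HF1 Ss Nn B1') => h; [left|right]; apply: C_mulr.
Qed.

Lemma Cr t n g : S t -> N n -> C n g -> C n (g * t) \/ C (n * t) (g * t).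
Proof.
move=> St Nn Cg.
have Hi : H (t * t)^-1 by apply: HV; exact: Sss.
have Cg' : C n^-1 ((t * t)^-1 * g^-1) by apply: C_mull; [exact: C_inv| exact: HB].
have E1 : (t * ((t * t)^-1 * g^-1))^-1 = g * t.
  by rewrite !invgM !invgK !mulgA mulgK.
case: (Cl St (NV Nn) Cg') => h; [left|right]; move/C_inv: h; rewrite E1 ?invgK //.
apply: C_eqH; rewrite invgM invgK (Sinv St) mulgA; exact: eqH_H.
Qed.


Lemma Sbad s : S s -> exists b, B b /\ ~ B (s * b * s) /\ C s (s * b * s).
Proof.
move=> Ss; have [b [Bb nB]] : exists b, B b /\ ~ B (s * b * s).
  apply: NNPP => hn; apply: (HF2 Ss) => g; split.
    by case=> b [Bb ->]; apply: NNPP => nB; apply: hn; exists b.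
  move=> Bg; exists ((s * s)^-1 * (s * g * s) * (s * s)^-1); split.
    have Hi : B (s * s)^-1 by apply: HB; apply: HV; exact: Sss.
    apply: BM => //; apply: BM => //; apply: NNPP => nB; apply: hn; exists g; done.
  by rewrite !invgM !mulgA mulgV mul1g mulVg mul1g mulgK mulgVK.
exists b; split=> //; split=> //.
case: (HF1 Ss (SN Ss) Bb) => // h; case: nB; apply: C_B h; exact: Sss.
Qed.

Lemma Cuniq_aux k : forall n n' g, N n -> N n' -> lenf n <= k -> lenf n <= lenf n' ->
  C n g -> C n' g -> eqH n n'.
Proof.
elim: k => [|k IH] n n' g Nn Nn' Hk Hle Cn Cn'.
- have Hn : H n by apply: lenf0 => //; apply/eqP; rewrite -leqn0.
  have Bg := C_B Hn Cn.
  case: Cn' => [b3 [b4 [B3 [B4 Eg]]]].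
  have Bn' : B n'.
    have -> : n' = b3^-1 * g * b4^-1 by rewrite Eg !mulgA mulgK mulVg mul1g.
    by apply: BM; [apply: BM => //; exact: BV| exact: BV].
  have Hn' : H n' by apply/HHBN.
  by exists (n'^-1 * n); split; [apply: HM => //; exact: HV| rewrite mulVKg].
- case E: (lenf n) => [|j].
    apply: (IH n n' g) => //; by rewrite E.
  have [a [n1 [Sa [Nn1 [En Ln1]]]]] := lenf_first Nn E.
  have Cnn : C n' n.
    case: Cn => [b1 [b2 [B1' [B2 Eg]]]].
    have -> : n = b1^-1 * g * b2^-1 by rewrite Eg !mulgA mulgK mulVg mul1g.
    by apply: C_mulr; [apply: C_mull => //; exact: BV| exact: BV].
  have Hi : H (a * a)^-1 by apply: HV; exact: Sss.
  have C1 : C n' ((a * a)^-1 * n) by apply: C_mull => //; exact: HB.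
  have E2 : a * ((a * a)^-1 * n) = n1 by rewrite mulgA -(Sinv Sa) En mulKg.
  have Hj : j <= k by rewrite -ltnS -E.
  case: (Cl Sa Nn' C1); rewrite E2 => C2.
    have := IH n1 n' n1 Nn1 Nn' _ _ (C_self n1) C2; rewrite Ln1 => /(_ Hj).
    have -> : j <= lenf n' by apply: leq_trans Hle; rewrite E.
    move=> /(_ isT) /eqH_sym /(lenf_eqH Nn1); rewrite Ln1 => E3.
    by move: Hle; rewrite E -E3 ltnn.
  have Nan' : N (a * n') by apply: NM => //; exact: SN.
  have Hle2 : j <= lenf (a * n').
    have : lenf n' <= (lenf (a * n')).+1.
      have := lenf_mul (NV (SN Sa)) Nan'; rewrite mulKg lenf_inv ?(lenf_S Sa) //; exact: SN.
    by move=> h; rewrite -ltnS -E (leq_trans Hle h).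
  have := IH n1 (a * n') n1 Nn1 Nan' _ _ (C_self n1) C2; rewrite Ln1 => /(_ Hj Hle2) h.
  rewrite En; apply: eqH_trans (eqH_mull a h) _; exact: eqH_ss.
Qed.

Lemma Cuniq n n' g : N n -> N n' -> C n g -> C n' g -> eqH n n'.
Proof.
move=> Nn Nn' Cn Cn'; case: (leqP (lenf n) (lenf n')) => h.
  exact: (@Cuniq_aux (lenf n) n n' g Nn Nn' (leqnn _) h Cn Cn').
by apply: eqH_sym; exact: (@Cuniq_aux (lenf n') n' n g Nn' Nn (leqnn _) (ltnW h) Cn' Cn).
Qed.


Lemma lenf_Sl' s w : S s -> N w -> lenf w <= (lenf (s * w)).+1.
Proof.
move=> Ss Nw; have Nsw : N (s * w) by apply: NM => //; exact: SN.
have := lenf_mul (NV (SN Ss)) Nsw; rewrite mulKg lenf_inv ?(lenf_S Ss) //; exact: SN.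
Qed.
Lemma lenf_Sr' t w : S t -> N w -> lenf w <= (lenf (w * t)).+1.
Proof.
move=> St Nw; have Nwt : N (w * t) by apply: NM => //; exact: SN.
have := lenf_mul Nwt (NV (SN St)); rewrite mulgK lenf_inv ?(lenf_S St) ?addn1 //; exact: SN.
Qed.

Lemma asc_aux k : forall s w, lenf w <= k -> S s -> N w -> lenf w <= lenf (s * w) ->
  forall b, B b -> C (s * w) (s * b * w).
Proof.
elim: k => [|k IH] s w Hk Ss Nw Hle b Bb.
  have Hw : H w by apply: lenf0 => //; apply/eqP; rewrite -leqn0.
  have -> : s * b * w = s * w * (w^-1 * (b * w)) by rewrite mulgA mulgK mulgA.
  apply: C_mulr; first exact: C_self.
  by apply: BM; [apply: BV; exact: HB| apply: BM => //; exact: HB].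
case E: (lenf w) => [|j].
  by apply: (IH s w) => //; rewrite E.
have [w' [t [St [Nw' [Ew Lw']]]]] := lenf_last Nw E.
apply: NNPP => nC.
have Cw : C w (s * (b * w)) .
  case: (Cl Ss Nw (C_mull (C_self w) Bb)) => // h; case: nC; by rewrite -mulgA.
have Nsw' : N (s * w') by apply: NM => //; exact: SN.
have Hj : j <= k by rewrite -ltnS -E.
case: (leqP (lenf w') (lenf (s * w'))) => hw'.
  have C1 := IH s w' (leq_trans (eq_leq Lw') Hj) Ss Nw' hw' b Bb.
  case: (Cr St Nsw' C1) => h; last first.
    by case: nC; rewrite Ew !mulgA.
  rewrite -!mulgA -Ew in h.
  have := Cuniq Nw Nsw' Cw h.
  case=> h0 [Hh0 Ew2].
  have : lenf (s * w) = lenf w'.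
    have Nss : N (s * (s * w')) by apply: NM => //; exact: SN.
    rewrite Ew2 mulgA (lenf_mulH Nss Hh0).
    by apply: lenf_eqH => //; apply: eqH_ss.
  by move=> E3; move: Hle; rewrite E3 E Lw' ltnn.
have : lenf (s * w) <= j.
  rewrite Ew mulgA; apply: leq_trans (lenf_Sr St Nsw') _; by rewrite -Lw'.
by move=> h; move: Hle; rewrite E => /leq_trans /(_ h); rewrite ltnn.
Qed.

Lemma asc s w b : S s -> N w -> lenf w <= lenf (s * w) -> B b -> C (s * w) (s * b * w).
Proof. by move=> Ss Nw Hle Bb; apply: (@asc_aux (lenf w)). Qed.

Lemma ascr t w b : S t -> N w -> lenf w <= lenf (w * t) -> B b -> C (w * t) (w * b * t).
Proof.
move=> St Nw Hle Bb.
have Hi : H (t * t)^-1 by apply: HV; exact: Sss.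
have Nwi : N w^-1 by exact: NV.
have E1 : t * w^-1 = (w * t^-1)^-1 by rewrite invgM invgK.
have Nwt : N (w * t) by apply: NM => //; exact: SN.
have L1 : lenf (t * w^-1) = lenf (w * t).
  rewrite E1 lenf_inv; last by apply: NM => //; apply: NV; exact: SN.
  by rewrite (Sinv St) mulgA (lenf_mulH Nwt Hi).
have := @asc t w^-1 ((t * t)^-1 * b^-1) St Nwi.
rewrite L1 lenf_inv // => /(_ Hle); move/(_ (BM (HB Hi) (BV Bb))) => /C_inv.
rewrite !invgM !invgK => h.
apply: (C_eqH (n := w * t^-1)); first by rewrite (Sinv St) mulgA; apply: eqH_H.
by move: h; rewrite !mulgA mulgK.
Qed.

Lemma par s w : S s -> N w -> lenf (s * w) <> lenf w.
Proof.
move=> Ss Nw E.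
have Nsw : N (s * w) by apply: NM => //; exact: SN.
have [b0 [Bb0 [_ Cc]]] := Sbad Ss.
have C1 : C w (s * b0 * (s * w)).
  apply: (C_eqH (n := s * (s * w))); first exact: eqH_ss.
  by apply: asc => //; rewrite E (lenf_eqH Nw (eqH_ss Ss Nw)).
have C2 : C (s * w) (s * b0 * (s * w)).
  case: Cc => [b1 [b2 [B1' [B2 Ec]]]].
  rewrite mulgA Ec -!mulgA; apply: C_mull => //.
  by rewrite mulgA; apply: asc => //; rewrite E.
have [h [Hh Ew]] := Cuniq Nw Nsw C1 C2.
apply: (SnH Ss).
have -> : s = w * h^-1 * w^-1.
  by rewrite {1}Ew !mulgK.
by rewrite -mulgA; apply: HJ' => //; exact: HV.
Qed.

Lemma parr t w : S t -> N w -> lenf (w * t) <> lenf w.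
Proof.
move=> St Nw E.
have Hi : H (t * t)^-1 by apply: HV; exact: Sss.
have Nw' : N ((t * t)^-1 * w^-1) by apply: NM; [exact: HN| exact: NV].
apply: (par St Nw').
rewrite mulgA -(Sinv St) -invgM lenf_inv ?E; last by apply: NM => //; exact: SN.
by rewrite lenf_Hmul ?lenf_inv //; exact: NV.
Qed.

Lemma pm1 s w : S s -> N w -> lenf (s * w) = (lenf w).+1 \/ lenf w = (lenf (s * w)).+1.
Proof.
move=> Ss Nw; have h1 := lenf_Sl Ss Nw; have h2 := lenf_Sl' Ss Nw; have h3 := par Ss Nw.
case: (ltngtP (lenf (s * w)) (lenf w)) => h; last by [].
  by right; apply/eqP; rewrite eqn_leq h2 h.
by left; apply/eqP; rewrite eqn_leq h1 h.
Qed.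

Lemma pm1r t w : S t -> N w -> lenf (w * t) = (lenf w).+1 \/ lenf w = (lenf (w * t)).+1.
Proof.
move=> St Nw; have h1 := lenf_Sr St Nw; have h2 := lenf_Sr' St Nw; have h3 := parr St Nw.
case: (ltngtP (lenf (w * t)) (lenf w)) => h; last by [].
  by right; apply/eqP; rewrite eqn_leq h2 h.
by left; apply/eqP; rewrite eqn_leq h1 h.
Qed.


Lemma eqH_cc x c : S c -> eqH (x * c * c) x.
Proof. by move=> Sc; rewrite -mulgA; apply: eqH_H; exact: Sss. Qed.

Lemma core_ex t c v : S t -> S c -> N v -> lenf v <= lenf (v * c) ->
  lenf (t * v * c) < lenf (t * v) -> eqH (t * v * c) v.
Proof.
move=> St Sc Nv Hasc Hdesc.
have Ntv : N (t * v) by apply: NM => //; exact: SN.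
have Ntvc : N (t * v * c) by apply: NM => //; exact: SN.
have Nvc : N (v * c) by apply: NM => //; exact: SN.
have [b0 [Bb0 [_ Cc]]] := Sbad Sc.
have C1 : C (t * v) (t * v * c * b0 * c).
  apply: (C_eqH (n := t * v * c * c)); first exact: eqH_cc.
  apply: ascr => //; rewrite (lenf_eqH Ntv (eqH_cc _ Sc)); exact: ltnW.
case: Cc => [b1 [b2 [B1' [B2 Ec]]]].
have C2 : C (v * c) (v * (c * b0 * c)).
  rewrite Ec !mulgA; apply: C_mulr => //; exact: ascr.
have Ng : N (v * c) by [].
case: (Cl St Nvc C2) => C3.
  have [h [Hh E]] : eqH (t * v) (v * c).
    apply: Cuniq Ntv Nvc C1 _; by move: C3; rewrite !mulgA.
  have [h' [Hh' E']] := Hmovel Hh (SN Sc).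
  rewrite E -mulgA E' mulgA; apply: eqH_trans (eqH_H _ Hh') _; exact: eqH_cc.
have [h [Hh E]] : eqH (t * v) (t * (v * c)).
  apply: Cuniq Ntv _ C1 _; first by rewrite mulgA.
  by move: C3; rewrite !mulgA.
have E1 : c * h = 1.
  by apply: (mulgI (t * v)); rewrite mulg1 {2}E !mulgA.
case: (SnH Sc); have -> : c = h^-1 by rewrite -(mulg1_eq E1) invgK.
exact: HV.
Qed.

Lemma prod_cons a l : prod (a :: l) = a * prod l. Proof. by []. Qed.

Lemma prodN' l : allS l -> N (prod l). Proof. exact: prodN. Qed.

Lemma reduced_cons a l : allS (a :: l) -> lenf (prod (a :: l)) = size (a :: l) ->
  lenf (prod l) = size l.
Proof.
case/allS_cons=> Sa Sl E; apply/eqP; rewrite eqn_leq; apply/andP; split.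
  by have := lenf_le Sl H1; rewrite mulg1.
by rewrite -ltnS -[(size l).+1]/(size (a :: l)) -E /=; apply: lenf_Sl => //; exact: prodN.
Qed.

Lemma exch l c : allS l -> S c -> lenf (prod l) = size l -> lenf (prod l * c) < size l ->
  exists l1 a l2, l = l1 ++ a :: l2 /\ eqH (prod l * c) (prod (l1 ++ l2)).
Proof.
elim: l => [|a l IH] Sl Sc Hred Hd; first by [].
have Sl' := Sl; case/allS_cons: Sl' => Sa Sl'.
have Hred' := reduced_cons Sl Hred.
have NP := prodN Sl'.
case: (boolP (lenf (prod l * c) < size l)) => h.
  have [l1 [a' [l2 [El E]]]] := IH Sl' Sc Hred' h.
  exists (a :: l1), a', l2; split; first by rewrite El.
  by rewrite !prod_cons -mulgA; apply: eqH_mull.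
exists [::], a, l; split=> //; rewrite cat0s prod_cons.
apply: core_ex => //; first by rewrite Hred' leqNgt.
by move: Hd; rewrite -Hred prod_cons.
Qed.

Lemma descent s w y : S s -> N w -> lenf w <= lenf (s * w) -> B y ->
  B (s * w * y * (s * w)^-1) -> B (w * y * w^-1).
Proof.
move=> Ss Nw Hasc By Bc.
set z := w * y * w^-1.
apply: NNPP => nz.
have Nsw : N (s * w) by apply: NM => //; exact: SN.
set b := s * w * y * (s * w)^-1 in Bc.
have Ez : z = (s * s)^-1 * (s * b * s).
  by rewrite /b /z !invgM !mulgA mulgVK -[s^-1 * s^-1 * s]mulgA mulVg mulg1 mulVg mul1g.
have Hi : H (s * s)^-1 by apply: HV; exact: Sss.
case: (HF1 Ss (SN Ss) Bc) => Cb; last first.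
  by case: nz; rewrite Ez; apply: BM; [exact: HB| apply: (C_B (Sss Ss) Cb)].
have C1 : C (s * w) (z * w).
  case: Cb => [b1 [b2 [B1' [B2 E2]]]].
  have -> : z * w = ((s * s)^-1 * b1) * (s * b2 * w) by rewrite Ez E2 !mulgA.
  by apply: C_mull; [apply: asc| exact: BM (HB Hi) B1'].
have C2 : C w (z * w) by rewrite /z mulgVK; apply: C_mulr => //; exact: C_self.
have [h [Hh E]] := Cuniq Nw Nsw C2 C1.
apply: (SnH Ss); have -> : s = w * h^-1 * w^-1.
  by rewrite {1}E !mulgK.
by rewrite -mulgA; apply: HJ' => //; exact: HV.
Qed.


Lemma reduced_cat l1 l2 : allS l1 -> allS l2 -> lenf (prod (l1 ++ l2)) = size l1 + size l2 ->
  lenf (prod l1) = size l1 /\ lenf (prod l2) = size l2.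
Proof.
move=> S1 S2 E.
have h1 : lenf (prod l1) <= size l1 by have := lenf_le S1 H1; rewrite mulg1.
have h2 : lenf (prod l2) <= size l2 by have := lenf_le S2 H1; rewrite mulg1.
have h3 := lenf_mul (prodN S1) (prodN S2); rewrite -prod_cat E in h3.
split; apply/eqP; rewrite eqn_leq ?h1 ?h2 /=.
  by rewrite -(leq_add2r (size l2)); apply: leq_trans h3 _; rewrite leq_add2l.
by rewrite -(leq_add2l (size l1)); apply: leq_trans h3 _; rewrite leq_add2r.
Qed.

Fixpoint alt (a b : gT) (k : nat) : seq gT := if k is k'.+1 then a :: alt b a k' else [::].

Lemma alt_allS a b k : S a -> S b -> allS (alt a b k).
Proof.
elim: k a b => [|k IH] a b Sa Sb /=; first exact: allS_nil.
by apply/allS_cons; split=> //; exact: IH.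
Qed.

Lemma size_alt a b k : size (alt a b k) = k.
Proof. by elim: k a b => [|k IH] a b //=; rewrite IH. Qed.

Lemma alt_rcons a b k : exists c, (c = a \/ c = b) /\ alt a b k.+1 = rcons (alt a b k) c.
Proof.
elim: k a b => [|k IH] a b; first by exists a; split; [left|].
have [c [hc E]] := IH b a; exists c; split; first by case: hc; [right|left].
by rewrite -[alt a b k.+2]/(a :: alt b a k.+1) E.
Qed.

Lemma lenf_prod_le l : allS l -> lenf (prod l) <= size l.
Proof. by move=> Sl; have := lenf_le Sl H1; rewrite mulg1. Qed.

Lemma dih k : forall a b, S a -> S b -> lenf (prod (alt a b k)) = k ->
  lenf (prod (alt a b k.+1)) <= k -> eqH (prod (alt a b k)) (prod (alt b a k)).
Proof.
elim: k => [|k IH] a b Sa Sb Hred Hd.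
  by move: Hd; rewrite /= mulg1 (lenf_S Sa).
have [c [hc Ec]] := alt_rcons b a k.
have Sc : S c by case: hc => ->.
have Sv := alt_allS (k:=k) Sb Sa.
have Nv := prodN Sv.
have Sl : allS (a :: alt b a k) by apply/allS_cons.
have Hred' : lenf (prod (alt b a k)) = k.
  have := reduced_cons Sl; rewrite [size _]/= size_alt; apply; exact: Hred.
have E1 : prod (alt a b k.+2) = a * prod (alt b a k) * c by rewrite -[alt a b k.+2]/(a :: alt b a k.+1) Ec prod_cons prod_rcons mulgA.
have E2 : prod (alt b a k.+1) = prod (alt b a k) * c by rewrite Ec prod_rcons.
have Nvc : N (prod (alt b a k) * c) by apply: NM => //; exact: SN.
case: (pm1r Sc Nv) => Hc; last first.
  have Heq : eqH (prod (alt b a k)) (prod (alt a b k)).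
    apply: IH => //.
    rewrite E2; move: Hc; rewrite Hred' => Hc'; apply: ltnW; rewrite {2}Hc'; exact: ltnSn.
  have [k' Ek] : exists k', k = k'.+1.
    move: Hc; rewrite Hred'; case: (k) => [|k'] // _; by exists k'.
  have : lenf (prod (alt a b k.+1)) <= k'.
    have Nab : N (prod (alt a b k)) by apply: prodN; apply: alt_allS.
    rewrite [alt a b k.+1]/= prod_cons (lenf_eqH _ (eqH_mull a Heq)); last by apply: NM => //; exact: SN.
    rewrite Ek [alt a b k'.+1]/= prod_cons mulgA.
    have Nw : N (prod (alt b a k')) by apply: prodN; apply: alt_allS.
    have [h [Hh ->]] := Hmovel (Sss Sa) Nw.
    rewrite (lenf_mulH Nw Hh); have := lenf_prod_le (alt_allS (k:=k') Sb Sa); by rewrite size_alt.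
  by rewrite Hred Ek ltnNge leqnSn.
have Nav : N (a * prod (alt b a k)) by apply: NM => //; exact: SN.
have Hne := parr Sc Nav.
have Hav : lenf (a * prod (alt b a k)) = k.+1 := Hred.
have Hd2 : lenf (a * prod (alt b a k) * c) <= k.+1 by rewrite -E1.
have Hd' : lenf (a * prod (alt b a k) * c) < lenf (a * prod (alt b a k)).
  by rewrite Hav ltn_neqAle Hd2 andbT; apply/eqP; rewrite -Hav.
have Hle : lenf (prod (alt b a k)) <= lenf (prod (alt b a k) * c) by rewrite Hc.
have [h [Hh E]] := core_ex Sa Sc Nv Hle Hd'.
have [h' [Hh' Ehc]] := Hmovel Hh (SN Sc).
exists (h' * (c * c)^-1); split; first by apply: HM => //; apply: HV; exact: Sss.
rewrite prod_cons E2 mulgA -(mulgA _ c h') -Ehc mulgA.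
by rewrite -[_ * h * c * _]mulgA -(Sinv Sc) -E mulgK.
Qed.


Lemma cat_split (w0 l L1 L2 : seq gT) a : w0 ++ l = L1 ++ a :: L2 ->
  (exists M, w0 = L1 ++ a :: M /\ L2 = M ++ l) \/ (exists M, L1 = w0 ++ M /\ l = M ++ a :: L2).
Proof.
elim: w0 L1 => [|b w0 IH] L1 /=; first by move=> E; right; exists L1.
case: L1 => [|c L1] /= [Eb E]; first by left; exists w0; rewrite Eb E.
case: (IH _ E) => [[M [E1 E2]]|[M [E1 E2]]]; [left|right]; exists M; by rewrite Eb E1.
Qed.

Lemma eqH_cancel p a b : eqH (p * a) (p * b) -> eqH a b.
Proof. by case=> h [Hh E]; exists h; split=> //; apply: (mulgI p); rewrite E mulgA. Qed.

Section Coset.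
Variables (x r s : gT).
Hypotheses (Nx : N x) (Sr : S r) (Ss : S s).

Definition allJ (l : seq gT) := forall a, List.In a l -> a = r \/ a = s.
Lemma allJ_S l : allJ l -> allS l.
Proof. by move=> Jl a /Jl [->|->]. Qed.
Lemma allJ_cons a l : allJ (a :: l) <-> (a = r \/ a = s) /\ allJ l.
Proof.
split=> [h|[h1 h2] b /= hb]; first by split=> [|b hb]; apply: h; [left|right].
by case: hb => [<-|hb]; [exact: h1| exact: h2].
Qed.
Lemma allJ_cat l1 l2 : allJ (l1 ++ l2) <-> allJ l1 /\ allJ l2.
Proof.
split=> [h|[h1 h2] b hb].
  by split=> b hb; apply: h; apply: List.in_or_app; [left|right].
by case: (List.in_app_or _ _ _ hb) => hb'; [exact: h1|exact: h2].
Qed.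
Lemma allJ_rcons l a : allJ (rcons l a) <-> allJ l /\ (a = r \/ a = s).
Proof.
rewrite -cats1 allJ_cat allJ_cons; split=> [[? [? _]]|[? ?]]; first done.
by split=> //; split=> //.
Qed.
Lemma allJ_nil : allJ [::]. Proof. by []. Qed.

Definition Cs y := exists l h, allJ l /\ H h /\ y = x * prod l * h.

Lemma Cs_x : Cs x.
Proof. by exists [::], 1; split; [exact: allJ_nil| split; [exact: H1| rewrite /= !mulg1]]. Qed.
Lemma Cs_N y : Cs y -> N y.
Proof. by case=> l [h [Jl [Hh ->]]]; apply: NM; [apply: NM => //; apply: prodN; exact: allJ_S| exact: HN]. Qed.
Lemma Cs_H y h : Cs y -> H h -> Cs (y * h).
Proof. by case=> l [h0 [Jl [Hh0 ->]]] Hh; exists l, (h0 * h); split=> //; split; [exact: HM| rewrite !mulgA]. Qed.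
Lemma Cs_J y f : Cs y -> f = r \/ f = s -> Cs (y * f).
Proof.
case=> l [h0 [Jl [Hh0 ->]]] hf.
have Sf : S f by case: hf => ->.
have [h' [Hh' E]] := Hmovel Hh0 (SN Sf).
exists (rcons l f), h'; split; first by apply/allJ_rcons.
by split=> //; rewrite prod_rcons -!mulgA E !mulgA.
Qed.
Lemma Cs_Jinv y f : Cs y -> f = r \/ f = s -> Cs (y * f^-1).
Proof.
move=> Cy hf; have Sf : S f by case: hf => ->.
rewrite (Sinv Sf) mulgA; apply: Cs_H; first exact: Cs_J.
by apply: HV; exact: Sss.
Qed.
Lemma Cs_prod y l : Cs y -> allJ l -> Cs (y * prod l).
Proof.
elim: l y => [|a l IH] y Cy; first by rewrite /= mulg1.
case/allJ_cons=> ha Jl; rewrite prod_cons mulgA; apply: IH => //; exact: Cs_J.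
Qed.
Lemma Cs_prodinv y l : Cs y -> allJ l -> Cs (y * (prod l)^-1).
Proof.
elim: l y => [|a l IH] y Cy; first by rewrite /= invg1 mulg1.
case/allJ_cons=> ha Jl; rewrite prod_cons invgM mulgA; apply: Cs_Jinv => //; exact: IH.
Qed.
Lemma Cs_eqH y y' : eqH y' y -> Cs y -> Cs y'.
Proof. by case=> h [Hh ->] Cy; exact: Cs_H. Qed.

Lemma Cs_min : exists x0, Cs x0 /\ forall y, Cs y -> lenf x0 <= lenf y.
Proof.
have ex : exists k, pb (exists y, Cs y /\ lenf y = k).
  by exists (lenf x); apply/pbP; exists x; split=> //; exact: Cs_x.
case: (ex_minnP ex) => k /pbP [x0 [Cx0 E]] hmin.
exists x0; split=> // y Cy; rewrite E; apply: hmin; apply/pbP; by exists y.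
Qed.

Lemma addit x0 : Cs x0 -> (forall y, Cs y -> lenf x0 <= lenf y) ->
  forall l, allJ l -> lenf (prod l) = size l -> lenf (x0 * prod l) = lenf x0 + size l.
Proof.
move=> Cx0 hmin; have Nx0 := Cs_N Cx0.
elim/last_ind => [|l f IH]; first by rewrite /= mulg1 addn0.
case/allJ_rcons=> Jl hf Hred.
have Sf : S f by case: hf => ->.
have Sl := allJ_S Jl.
have Hred_l : lenf (prod l) = size l.
  have Slf : allS [:: f] by apply/allS_cons; split=> //; exact: allS_nil.
  have := reduced_cat Sl Slf; rewrite cats1 Hred size_rcons addn1 => /(_ erefl); case=> //.
have IH' := IH Jl Hred_l.
have Ny : N (x0 * prod l) by apply: NM => //; exact: prodN.
rewrite prod_rcons mulgA size_rcons addnS.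
case: (pm1r Sf Ny) => [->|Hdesc]; first by rewrite IH'.
exfalso.
have [w0 [h0 [Sw0 [Hh0 [sz0 Ex0]]]]] := lenf_dec Nx0.
have [h1 [Hh1 E1]] := Hmovel Hh0 (prodN Sl).
have Ey : x0 * prod l = prod (w0 ++ l) * h1 by rewrite Ex0 prod_cat -mulgA E1 !mulgA.
have SW : allS (w0 ++ l) by apply/allS_cat.
have NW := prodN SW.
have HredW : lenf (prod (w0 ++ l)) = size (w0 ++ l).
  by rewrite -(lenf_mulH NW Hh1) -Ey IH' size_cat sz0.
have [h2 [Hh2 E2]] := Hmovel Hh1 (SN Sf).
have Eyf : x0 * prod l * f = prod (w0 ++ l) * f * h2 by rewrite Ey -mulgA E2 mulgA.
have NWf : N (prod (w0 ++ l) * f) by apply: NM => //; exact: SN.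
have HdW : lenf (prod (w0 ++ l) * f) < size (w0 ++ l).
  by rewrite -(lenf_mulH NWf Hh2) -Eyf -HredW -(lenf_mulH NW Hh1) -Ey Hdesc.
have [L1 [a [L2 [EW Eq]]]] := exch SW Sf HredW HdW.
case: (cat_split EW) => [[M [Ew0 EL2]]|[M [EL1 El]]].
- (* deletion inside w0: contradiction with minimality *)
  have SLM : allS (L1 ++ M).
    by move: Sw0; rewrite Ew0 => /allS_cat [? /allS_cons [_ ?]]; apply/allS_cat.
  have Cy' : Cs (prod (L1 ++ M)).
    case: Eq => h3 [Hh3 E3]; rewrite EL2 catA in E3.
    have -> : prod (L1 ++ M) = prod (w0 ++ l) * f * h3^-1 * (prod l)^-1.
      by rewrite E3 mulgK (prod_cat (L1 ++ M) l) mulgK.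
    have Ew0' : prod w0 = x0 * h0^-1 by rewrite Ex0 mulgK.
    rewrite prod_cat Ew0'.
    apply: Cs_prodinv => //; apply: Cs_H; last exact: HV.
    apply: Cs_J => //; apply: Cs_prod => //; apply: Cs_H => //; exact: HV.
  have := hmin _ Cy'.
  have := lenf_prod_le SLM.
  rewrite -sz0 Ew0 !size_cat /= addnS => h4 h5.
  by have := leq_trans h5 h4; rewrite ltnn.
- (* deletion inside l: contradiction with reducedness *)
  move: Eq; rewrite EL1 -catA (prod_cat w0 l) (prod_cat w0 (M ++ L2)) -mulgA => /eqH_cancel Eq.
  have SM : allS (M ++ L2) by move: Sl; rewrite El => /allS_cat [? /allS_cons [_ ?]]; apply/allS_cat.
  have Nlf : N (prod l * f) by apply: NM; [exact: prodN| exact: SN].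
  have := lenf_prod_le SM.
  rewrite -(lenf_eqH (prodN SM) Eq) => h4.
  move: Hred; rewrite prod_rcons size_rcons => h5.
  move: h4; rewrite h5 El !size_cat /=; lia.
Qed.


Lemma shorter l : allJ l -> lenf (prod l) < size l ->
  exists l', allJ l' /\ size l' < size l /\ eqH (prod l) (prod l').
Proof.
elim/last_ind: l => [|l f IH]; first by [].
case/allJ_rcons=> Jl hf; have Sf : S f by case: hf => ->.
have Sl := allJ_S Jl; have Nl := prodN Sl.
rewrite prod_rcons size_rcons => Hlt.
case: (boolP (lenf (prod l) < size l)) => h.
  have [l' [Jl' [sz E]]] := IH Jl h.
  exists (rcons l' f); split; first by apply/allJ_rcons.
  by rewrite size_rcons ltnS; split=> //; rewrite prod_rcons; apply: eqH_mulr => //; exact: SN.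
have Hred : lenf (prod l) = size l.
  by apply/eqP; rewrite eqn_leq lenf_prod_le // leqNgt.
have Hd : lenf (prod l * f) < size l.
  case: (pm1r Sf Nl) => E; first by move: Hlt; rewrite E Hred ltnn.
  by move: E; rewrite Hred => ->.
have [L1 [a [L2 [El E]]]] := exch Sl Sf Hred Hd.
exists (L1 ++ L2); split.
  by move: Jl; rewrite El => /allJ_cat [? /allJ_cons [_ ?]]; apply/allJ_cat.
split=> //; rewrite El !size_cat /=; lia.
Qed.

Lemma reduceJ n : forall l, size l <= n -> allJ l ->
  exists l', allJ l' /\ lenf (prod l') = size l' /\ eqH (prod l) (prod l').
Proof.
elim: n => [|n IH] l hl Jl.
  case: l hl Jl => // _ _; exists [::]; split=> //; split; first by rewrite lenf_H //; exact: H1.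
  exact: eqH_refl.
case: (boolP (lenf (prod l) < size l)) => h.
  have [l' [Jl' [sz E]]] := shorter Jl h.
  have hl' : size l' <= n by rewrite -ltnS; apply: leq_trans sz hl.
  have [l'' [Jl'' [R E']]] := IH l' hl' Jl'.
  by exists l''; split=> //; split=> //; apply: eqH_trans E E'.
exists l; split=> //; split; last exact: eqH_refl.
apply/eqP; rewrite eqn_leq; apply/andP; split; [exact: lenf_prod_le (allJ_S Jl)| by rewrite leqNgt].
Qed.

Lemma Jinv l : allJ l -> exists m, allJ m /\ eqH (prod l)^-1 (prod m).
Proof.
elim: l => [|a l IH] /=.
  by move=> _; exists [::]; split=> //; rewrite invg1; exact: eqH_refl.
case/allJ_cons=> ha Jl; have Sa : S a by case: ha => ->.
have [m [Jm E]] := IH Jl.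
exists (rcons m a); split; first by apply/allJ_rcons.
rewrite invgM prod_rcons (Sinv Sa) mulgA.
apply: eqH_trans (eqH_H _ _) _; first by apply: HV; exact: Sss.
apply: eqH_mulr; [exact: SN| exact: E].
Qed.

End Coset.


Lemma alt_prefix a b k : S a -> S b -> lenf (prod (alt a b k.+1)) = k.+1 ->
  lenf (prod (alt a b k)) = k.
Proof.
move=> Sa Sb; have [c [hc E]] := alt_rcons a b k; have Sc : S c by case: hc => ->.
rewrite E -cats1 => h.
have Sc1 : allS [:: c] by apply/allS_cons; split=> //; exact: allS_nil.
have := reduced_cat (alt_allS (k:=k) Sa Sb) Sc1; rewrite h size_alt addn1 => /(_ erefl).
by case.
Qed.

Lemma alt_prefix_le a b j M : S a -> S b -> j <= M -> lenf (prod (alt a b M)) = M ->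
  lenf (prod (alt a b j)) = j.
Proof.
move=> Sa Sb; elim: M => [|M IH]; first by rewrite leqn0 => /eqP ->.
rewrite leq_eqVlt => /orP [/eqP -> //|]; rewrite ltnS => hj h.
by apply: IH => //; apply: alt_prefix.
Qed.

Variable n0 : gT.
Hypothesis Nn0 : N n0.
Hypothesis Hmax : forall n, N n -> lenf n <= lenf n0.

Definition P y := lenf y + lenf (y^-1 * n0) = lenf n0.

Lemma P_ge y : N y -> lenf n0 <= lenf y + lenf (y^-1 * n0).
Proof.
move=> Ny; have := lenf_mul Ny (NM (NV Ny) Nn0); by rewrite mulVKg.
Qed.

Lemma P_eqH y y' : N y -> eqH y' y -> P y -> P y'.
Proof.
move=> Ny [h [Hh ->]]; rewrite /P (lenf_mulH Ny Hh) invgM -mulgA.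
by rewrite (lenf_Hmul (NM (NV Ny) Nn0) (HV Hh)).
Qed.

Lemma P_down y w : N y -> N w -> P (y * w) -> lenf (y * w) = lenf y + lenf w -> P y.
Proof.
move=> Ny Nw; rewrite /P => Py E.
have Nz : N ((y * w)^-1 * n0) by apply: NM => //; apply: NV; exact: NM.
have h1 := lenf_mul Nw Nz.
have E2 : w * ((y * w)^-1 * n0) = y^-1 * n0 by rewrite invgM !mulgA mulgV mul1g.
rewrite E2 in h1.
apply/eqP; rewrite eqn_leq P_ge // andbT.
move: Py; rewrite E => Py; lia.
Qed.


Lemma Qstep x s : N x -> S s -> P x -> lenf x < lenf (x * s) ->
  (forall y a, N y -> S a -> lenf x < lenf y -> P y -> lenf y < lenf (y * a) -> P (y * a)) ->
  P (x * s).
Proof.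
move=> Nx Ss Px Hxs IHo.
have Nv : N (x^-1 * n0) := NM (NV Nx) Nn0.
have Nxs : N (x * s) := NM Nx (SN Ss).
case Ev: (lenf (x^-1 * n0)) => [|j].
  exfalso; have := Hmax Nxs; move: Px; rewrite /P Ev addn0 => <-.
  by rewrite leqNgt Hxs.
have [r [v'' [Sr [Nv'' [Ev' Lv'']]]]] := lenf_first Nv Ev.
have Nxr : N (x * r) := NM Nx (SN Sr).
have Exr : (x * r)^-1 * n0 = v'' by rewrite invgM -mulgA Ev' mulKg.
have Lxr : lenf (x * r) = (lenf x).+1.
  apply/eqP; rewrite eqn_leq lenf_Sr //=.
  have := P_ge Nxr; rewrite Exr Lv''; move: Px; rewrite /P Ev => <-; lia.
have Pxr : P (x * r) by rewrite /P Exr Lxr Lv''; move: Px; rewrite /P Ev; lia.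
have [x0 [Cx0 hmin]] := Cs_min x r s.
have Nx0 := Cs_N Nx Sr Ss Cx0.
have Add0 := addit Nx Sr Ss Cx0 hmin.
case: Cx0 => l0 [h0 [Jl0 [Hh0 Ex0]]].
have [m0 [Jm0 Em0]] := Jinv Sr Ss Jl0.
have [m [Jm [Rm Em]]] := reduceJ Sr Ss (leqnn _) Jm0.
have Exm : eqH x (x0 * prod m).
  have E1 : x = x0 * h0^-1 * (prod l0)^-1 by rewrite Ex0 mulgK mulgK.
  rewrite E1; have Nm := prodN (allJ_S Sr Ss Jm).
  have [h [Hh Eh]] := eqH_trans Em0 Em.
  have [h3 [Hh3 E4]] := Hmovel (HV Hh0) Nm.
  exists (h3 * h); split; first exact: HM.
  by rewrite Eh !mulgA -(mulgA x0 h0^-1) E4 !mulgA.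
have Lx : lenf x = lenf x0 + size m.
  by rewrite (lenf_eqH (NM Nx0 (prodN (allJ_S Sr Ss Jm))) Exm) Add0.
have m_nil : m = [::].
  case/lastP: m Jm Rm Em Exm Lx => [//|m' f] Jm Rm Em Exm Lx.
  exfalso; case/allJ_rcons: Jm => Jm' hf.
  have Sf : S f by case: hf => ->.
  have Nm' := prodN (allJ_S Sr Ss Jm').
  have Nxm' : N (x0 * prod m') := NM Nx0 Nm'.
  have Lxf : lenf (x * f) = (lenf x).+1.
    case: hf => ->; first exact: Lxr.
    by apply/eqP; rewrite eqn_leq lenf_Sr //; exact: Hxs.
  case: Exm => h [Hh]; rewrite prod_rcons mulgA => Ex.
  have Hff := Sss Sf.
  have E5 : lenf (x * f) = lenf (x0 * prod m').
    rewrite Ex; have [h' [Hh' E6]] := Hmovel Hh (SN Sf); rewrite -(mulgA _ h f) E6.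
    rewrite !mulgA -(mulgA _ f f) (lenf_mulH _ Hh'); last exact: NM Nxm' (HN Hff).
    exact: lenf_mulH.
  have := lenf_mul Nx0 Nm'; have := lenf_prod_le (allJ_S Sr Ss Jm').
  move: Lx E5; rewrite Lxf size_rcons; lia.
rewrite m_nil /= mulg1 in Exm.
have Addx l : allJ r s l -> lenf (prod l) = size l -> lenf (x * prod l) = lenf x + size l.
  move=> Jl Rl; have Nl := prodN (allJ_S Sr Ss Jl).
  case: Exm => h [Hh ->]; rewrite -mulgA; have [h' [Hh' ->]] := Hmovel Hh Nl.
  rewrite mulgA (lenf_mulH (NM Nx0 Nl) Hh') Add0 // (lenf_mulH Nx0 Hh); done.
(* maximal reduced alternating word *)
have Jalt k a b : (a = r \/ a = s) -> (b = r \/ b = s) -> allJ r s (alt a b k).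
  elim: k a b => [|k IH] a b ha hb; first exact: allJ_nil.
  by apply/allJ_cons; split=> //; apply: IH.
have bnd : forall k, pb (lenf (prod (alt r s k)) = k) -> k <= lenf n0.
  move=> k /pbP Rk.
  have := Hmax (NM Nx (prodN (alt_allS (k:=k) Sr Ss))).
  rewrite Addx ?size_alt //; last by apply: Jalt; [left|right].
  lia.
have ex0 : exists k, pb (lenf (prod (alt r s k)) = k).
  by exists 0; apply/pbP; rewrite /= lenf_H //; exact: H1.
case: (ex_maxnP ex0 bnd) => M /pbP RM Mmax.
have RM1 : 1 <= M.
  apply: Mmax; apply/pbP; rewrite /= mulg1; exact: lenf_S.
have climb : forall i, 1 <= i <= M -> P (x * prod (alt r s i)).
  elim=> [//|i IHj] /andP [_ hj].
  case: i IHj hj => [|i] IHj hj; first by rewrite /= mulg1.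
  have [c [hc Ec]] := alt_rcons r s i.+1.
  have Sc : S c by case: hc => ->.
  have Rj : lenf (prod (alt r s i.+1)) = i.+1 by apply: (alt_prefix_le (M := M)) => //; exact: ltnW.
  have Rj2 : lenf (prod (alt r s i.+2)) = i.+2 by apply: (alt_prefix_le (M := M)).
  have Ny : N (x * prod (alt r s i.+1)) := NM Nx (prodN (alt_allS Sr Ss)).
  have Rj' : lenf (prod (alt r s i.+1)) = size (alt r s i.+1) by rewrite size_alt.
  have Rj2' : lenf (prod (alt r s i.+2)) = size (alt r s i.+2) by rewrite size_alt.
  have Ly := Addx _ (Jalt _ _ _ (or_introl erefl) (or_intror erefl)) Rj'.
  have Ly2 := Addx _ (Jalt _ _ _ (or_introl erefl) (or_intror erefl)) Rj2'.
  rewrite Ec prod_rcons mulgA; apply: IHo => //.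
  - by rewrite Ly size_alt addnS ltnS leq_addr.
  - by apply: IHj; apply/andP; split=> //; exact: ltnW.
  - rewrite -mulgA -prod_rcons -Ec Ly2 Ly !size_alt; lia.
have PM : P (x * prod (alt r s M)) by apply: climb; rewrite RM1 leqnn.
have Hbr : eqH (prod (alt r s M)) (prod (alt s r M)).
  apply: dih => //.
  have : ~~ pb (lenf (prod (alt r s M.+1)) = M.+1).
    by apply/negP => /Mmax; rewrite ltnn.
  move/pbP => hne.
  have := lenf_prod_le (alt_allS (k:=M.+1) Sr Ss); rewrite size_alt leq_eqVlt.
  by case/orP => [/eqP //|].
have PM' : P (x * prod (alt s r M)).
  apply: P_eqH PM; first exact: NM Nx (prodN (alt_allS Sr Ss)).
  by apply: eqH_mull; apply: eqH_sym.
case: M RM Mmax RM1 climb PM Hbr PM' => [//|M'] RM Mmax RM1 climb PM Hbr PM'.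
move: PM'; rewrite [alt s r M'.+1]/= prod_cons mulgA => PM'.
have Nw := prodN (alt_allS (k:=M') Sr Ss).
apply: (P_down Nxs Nw PM').
have L1 : lenf (x * s * prod (alt r s M')) = lenf x + M'.+1.
  rewrite -mulgA -prod_cons -(lenf_eqH _ (eqH_mull x Hbr)); last first.
    by apply: NM => //; apply: prodN; apply: alt_allS.
  by rewrite Addx ?size_alt //; apply: Jalt; [left|right].
have L2 := lenf_mul Nxs Nw.
have L3 := lenf_prod_le (alt_allS (k:=M') Sr Ss); rewrite size_alt in L3.
have L4 := lenf_Sr Ss Nx.
apply/eqP; rewrite eqn_leq L2 /=; move: L1 L2 L3 L4 Hxs => ->; lia.
Qed.


Lemma Qall d : forall x, lenf n0 - lenf x <= d -> N x -> forall s, S s -> P x ->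
  lenf x < lenf (x * s) -> P (x * s).
Proof.
elim: d => [|d IH] x hd Nx s Ss Px Hlt.
  exfalso; have := Hmax (NM Nx (SN Ss)); move: hd Hlt; lia.
apply: Qstep => // y a Ny Sa hxy Py hya; apply: IH => //.
have := Hmax Ny; move: hd hxy; lia.
Qed.

Lemma CL k : forall n, N n -> lenf n = k -> P n.
Proof.
elim: k => [|k IH] n Nn E.
  have Hn := lenf0 Nn E.
  by rewrite /P E (lenf_Hmul Nn0 (HV Hn)).
have [n' [a [Sa [Nn' [En Ln']]]]] := lenf_last Nn E.
rewrite En; apply: (@Qall (lenf n0 - lenf n')) => //; first exact: IH.
by rewrite -En E Ln'.
Qed.

Lemma chain k : forall x n y, lenf x = k -> N x -> N n -> lenf (x * n) = lenf x + lenf n ->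
  B y -> B (x * n * y * (x * n)^-1) -> B (n * y * n^-1).
Proof.
elim: k => [|k IH] x n y Lx Nx Nn Ladd By Bc.
  have Hx := lenf0 Nx Lx.
  have -> : n * y * n^-1 = x^-1 * (x * n * y * (x * n)^-1) * x.
    by rewrite invgM !mulgA mulVg mul1g mulgVK.
  by apply: BM; [apply: BM => //; apply: BV|]; exact: HB.
have [a [x' [Sa [Nx' [Ex Lx']]]]] := lenf_first Nx Lx.
have Nxn : N (x' * n) := NM Nx' Nn.
have Ladd' : lenf (a * (x' * n)) = k.+1 + lenf n by rewrite mulgA -Ex -Lx.
have L1 : lenf (x' * n) = lenf x' + lenf n.
  have := lenf_mul Nx' Nn; have := lenf_Sl Sa Nxn.
  move: Ladd'; rewrite Lx'; lia.
apply: (IH x') => //.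
apply: (descent Sa Nxn) => //.
  rewrite Ladd' L1 Lx'; lia.
by move: Bc; rewrite Ex !mulgA.
Qed.

Lemma key y : B y -> B (n0 * y * n0^-1) -> forall n, N n -> B (n * y * n^-1).
Proof.
move=> By Bc n Nn.
have Nx : N (n0 * n^-1) := NM Nn0 (NV Nn).
have Px := CL Nx erefl.
have E1 : (n0 * n^-1)^-1 * n0 = n by rewrite invgM invgK mulgVK.
have E2 : n0 * n^-1 * n = n0 by rewrite mulgVK.
apply: (@chain (lenf (n0 * n^-1)) (n0 * n^-1)) => //; rewrite E2 //.
by move: Px; rewrite /P E1.
Qed.


Hypothesis HU : normal_in U B.
Hypothesis HHU : forall g, H g -> U g -> g = 1.
Hypothesis Hcap : forall g, (forall n, N n -> conjset B n g) <-> H g.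

Lemma UB u : U u -> B u.
Proof. by move=> Uu; exists 1, u; split; [exact: H1| split=> //; rewrite mul1g]. Qed.

Lemma final g : H g -> setmul (setmul U (conjset U n0)) U g -> g = 1.
Proof.
move=> Hg [a [c [[u1 [v [Uu1 [[w [Uw Ev]] Ea]]]] [Uc Eg]]]].
have [[U1 [UM UV]] _] := HU.
have By : B v.
  have -> : v = u1^-1 * g * c^-1 by rewrite Eg Ea !mulgA mulgK mulVg mul1g.
  by apply: BM; [apply: BM; [apply: UB; exact: UV| exact: HB]| apply: UB; exact: UV].
have Ew : w = n0 * v * n0^-1 by rewrite Ev conjgE !mulgA mulgV mul1g mulgK.
have Bc : B (n0 * v * n0^-1) by rewrite -Ew; exact: UB.
have Hv : H v.
  apply/Hcap => n Nn; exists (n * v * n^-1); split; first exact: key.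
  by rewrite conjgE !mulgA mulVg mul1g mulgVK.
have Hw : H w by rewrite Ew -mulgA; exact: HJ'.
have w1 := HHU Hw Uw.
have v1 : v = 1 by rewrite Ev w1 conjgE mul1g mulVg.
apply: HHU => //; rewrite Eg Ea v1 mulg1; exact: UM.
Qed.

End BN.


Lemma wl_lenf (gT : groupType) (H N S : gT -> Prop) n k :
  is_subgrp N -> normal_in H N ->
  (forall s, S s -> N s /\ ~ H s /\ H (s * s)) -> in_gen N S H ->
  N n -> weyl_length H S n k -> k = lenf H S n.
Proof.
move=> HNs HHn HS Hg Nn [w hmin].
apply/eqP; rewrite eqn_leq; apply/andP; split.
  apply: hmin; exact: (lenf_word HNs HHn HS Hg Nn).
exact: (lenf_min HNs HHn HS Hg Nn w).
Qed.

Theorem lemma7 (gT : groupType) (H U N S : gT -> Prop) (n0 : gT) :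
  split_BN_pair H U N S ->
  finite_weyl N H ->
  longest_rep N H S n0 ->
  forall g : gT, H g -> setmul (setmul U (conjset U n0)) U g -> g = 1.
Proof.
case=> [[HBs [HNs [_ [HHBN [HHn [HS [Hg [F1 F2]]]]]]]] HU HHU Hcap] _ [Nn0 [k0 [Hwl Hk0]]].
have Hmax : forall n, N n -> lenf H S n <= lenf H S n0.
  move=> n Nn; rewrite -(wl_lenf HNs HHn HS Hg Nn0 Hwl).
  apply: (Hk0 n) => //; split; first exact: (lenf_word HNs HHn HS Hg Nn).
  by move=> k' hk'; exact: (lenf_min HNs HHn HS Hg Nn hk').
move=> g Hg' Hm.
exact: (final HBs HNs HHBN HHn HS Hg F1 F2 Nn0 Hmax HU HHU Hcap Hg' Hm).
Qed.
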